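(* With the notation of the context, $$\sum_{\lambda\in\mathcal{D}}(-1)^{n_\lambda}(m_\lambda+n_\lambda)q^{N_\lambda} =\sum_{r=1}^\infty(-1)^r\Big[(3r-1)q^{r(3r-1)/2}+3r\,q^{r(3r+1)/2}\Big]$$ as formal power series in $q$.
   Context: $\mathcal{D}$ denotes the set of all partitions into distinct parts (of all nonnegative integers, including the empty partition of $0$). For $\lambda\in\mathcal{D}$, $N_\lambda$ is the integer partitioned by $\lambda$, $n_\lambda$ is the number of parts of $\lambda$, and $m_\lambda$ is the largest part of $\lambda$ (with $m_\lambda=0$ for the empty partition). *)

(* Defs.v *)
From mathcomp Require Import all_boot all_order all_algebra.
Set Implicit Arguments. Unset Strict Implicit. Unset Printing Implicit Defensive.
Import Order.TTheory GRing.Theory Num.Theory.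
Local Open Scope ring_scope.

(* A formal power series in q with integer coefficients is represented by its
   coefficient sequence nat -> int; equality of series is equality of
   coefficient functions. *)

(* A partition of N into distinct parts is identified with its set of parts,
   a subset of {1,...,N}; we encode it as a set A of 'I_N.+1 not containing 0
   whose elements sum to N. *)
Definition is_dpart (N : nat) (A : {set 'I_N.+1}) : bool :=
  (ord0 \notin A) && (\sum_(i in A) (i : nat) == N)%N.

Definition npart (N : nat) (A : {set 'I_N.+1}) : nat := #|A|.
(* largest part m_lambda (0 for the empty partition) *)
Definition mpart (N : nat) (A : {set 'I_N.+1}) : nat := (\max_(i in A) (i : nat))%N.

Definition lhs_series (N : nat) : int :=
  \sum_(A : {set 'I_N.+1} | is_dpart A)
     (-1) ^+ npart A * (mpart A + npart A)%:Z.

(* coefficient of q^N in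
   sum_{r>=1} (-1)^r [ (3r-1) q^{r(3r-1)/2} + 3r q^{r(3r+1)/2} ];
   only r <= N can contribute since r(3r-1)/2 >= r. *)
Definition rhs_series (N : nat) : int :=
  \sum_(1 <= r < N.+2)
     (-1) ^+ r * ( (3 * r - 1)%:Z * (((r * (3 * r - 1)) %/ 2)%N == N)%:Z
                 + (3 * r)%:Z * (((r * (3 * r + 1)) %/ 2)%N == N)%:Z ).

(* Main.v *)
Require Import Defs.
From mathcomp Require Import all_boot all_order all_algebra zify.
From Stdlib Require Import FunctionalExtensionality.
Set Implicit Arguments. Unset Strict Implicit. Unset Printing Implicit Defensive.

Definition stair (m k : nat) : seq nat := [seq m - i | i <- iota 0 k].

Lemma stairS m k : stair m k.+1 = m :: stair m.-1 k.
Proof.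
rewrite /stair /= subn0 -(addn0 1) iotaDl -map_comp; congr (_ :: _).
apply: eq_map => i /=. lia.
Qed.

Lemma size_stair m k : size (stair m k) = k.
Proof. by rewrite size_map size_iota. Qed.

Lemma stair_cat m a b : stair m (a + b) = stair m a ++ stair (m - a) b.
Proof.
rewrite /stair iotaD map_cat add0n; congr (_ ++ _).
rewrite -{1}(addn0 a) iotaDl -map_comp; apply: eq_map => i /=. lia.
Qed.

Lemma stair_rcons m k : stair m k.+1 = rcons (stair m k) (m - k).
Proof. by rewrite -addn1 stair_cat cats1 /stair /= subn0. Qed.

Lemma stair_succ m k : k <= m.+1 -> stair m.+1 k = map succn (stair m k).
Proof.
move=> hk; rewrite /stair -map_comp; apply/eq_in_map => i.
rewrite mem_iota /= => hi; lia.
Qed.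

Lemma sumn_map_succ s : sumn (map succn s) = sumn s + size s.
Proof. elim: s => //= x s ->; lia. Qed.

Lemma stair_pos m k : k <= m -> all (leq 1) (stair m k).
Proof.
elim: k m => [|k IH] m hk; first by [].
rewrite stairS /= IH; last lia. rewrite andbT; lia.
Qed.

Lemma sumn_stair2 m k : k <= m -> 2 * sumn (stair m k) = k * (2 * m + 1 - k).
Proof.
elim: k => [|k IH] hk; first by [].
rewrite stair_rcons sumn_rcons mulnDr IH; last lia.
have -> : m = k + (m - k.+1).+1 by lia.
set d := m - k.+1. nia.
Qed.

Lemma sorted_stair m k t : k <= m ->
  sorted gtn (stair m k.+1 ++ t) = path gtn (m - k) t.
Proof.
elim: k m => [|k IH] m hk; first by rewrite stairS /= subn0.
rewrite stairS cat_cons (stairS m.-1) cat_cons.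
change ((m.-1 < m) && sorted gtn (m.-1 :: (stair m.-2 k ++ t)) = path gtn (m - k.+1) t).
rewrite -cat_cons -(stairS m.-1) IH; last lia.
have -> : (m.-1 < m) = true by apply/idP; lia.
by have -> : m.-1 - k = m - k.+1 by lia.
Qed.

Fixpoint sig (l : seq nat) : nat :=
  match l with
  | [::] => 0
  | x :: t => match t with
              | [::] => 1
              | y :: _ => if x == y.+1 then (sig t).+1 else 1
              end
  end.

Lemma sig_stair m k t : k <= m -> (t = [::] \/ (head 0 t).+1 < m - k) ->
  sig (stair m k.+1 ++ t) = k.+1.
Proof.
elim: k m => [|k IH] m hk ht.
  rewrite stairS /=; case: t ht => [|y t] //= [] // h.
  by have -> : (m == y.+1) = false by apply/eqP; lia.
rewrite stairS cat_cons (stairS m.-1) cat_cons.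
change ((if m == m.-1.+1 then (sig (m.-1 :: (stair m.-2 k ++ t))).+1 else 1) = k.+2).
have -> : (m == m.-1.+1) = true by apply/eqP; lia.
rewrite -cat_cons -stairS IH //; first lia.
by case: ht => [->|h]; [left|right; lia].
Qed.

Lemma sig_ge m k t : k <= m -> k.+1 <= sig (stair m k.+1 ++ t).
Proof.
elim: k m => [|k IH] m hk.
  by rewrite stairS /=; case: t => //= y t; case: ifP.
rewrite stairS cat_cons (stairS m.-1) cat_cons.
change (k.+2 <= (if m == m.-1.+1 then (sig (m.-1 :: (stair m.-2 k ++ t))).+1 else 1)).
have -> : (m == m.-1.+1) = true by apply/eqP; lia.
by rewrite -cat_cons -stairS ltnS IH //; lia.
Qed.

Lemma structure x t : sorted gtn (x :: t) ->
  exists k d, [/\ sig (x :: t) = k.+1, x :: t = stair x k.+1 ++ d, k <= x &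
                  (d = [::] \/ (head 0 d).+1 < x - k)].
Proof.
elim: t x => [|y t IH] x hs.
  by exists 0, [::]; split; [by []|by rewrite stairS|by []|by left].
move: hs => /= /andP[hyx hs].
have [exy|nxy] : x = y.+1 \/ x <> y.+1 by lia.
  have [k [d [h1 h2 h3 h4]]] := IH y hs.
  have e1 : sig (x :: y :: t) = k.+2.
    rewrite exy -h1.
    by change ((if y.+1 == y.+1 then (sig (y::t)).+1 else 1) = (sig (y::t)).+1); rewrite eqxx.
  have e2 : x :: y :: t = stair x k.+2 ++ d by rewrite stairS exy -pred_Sn h2.
  have e4 : d = [::] \/ (head 0 d).+1 < x - k.+1.
    by case: h4 => [->|h]; [left|right; lia].
  have e3 : k.+1 <= x by lia.
  by exists k.+1, d; split; [exact e1|exact e2|exact e3|exact e4].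
have e1 : sig (x :: y :: t) = 1.
  change ((if x == y.+1 then (sig (y::t)).+1 else 1) = 1).
  by have -> : (x == y.+1) = false by apply/eqP.
have e2 : x :: y :: t = stair x 1 ++ (y :: t) by rewrite stairS.
have e4 : (y :: t) = [::] \/ (head 0 (y :: t)).+1 < x - 0.
  right => /=. lia.
by exists 0, (y :: t); split; [exact e1|exact e2|exact (leq0n x)|exact e4].
Qed.

Definition op1 (l : seq nat) :=
  let s := last 0 l in let b := take (size l).-1 l in
  [seq x.+1 | x <- take s b] ++ drop s b.
Definition op2 (l : seq nat) :=
  let k := sig l in rcons ([seq x.-1 | x <- take k l] ++ drop k l) k.
Definition fr l := if last 0 l <= sig l then op1 l else op2 l.
Definition pent (l : seq nat) := let n := size l in
  (l == [::]) || (l == stair (2 * n - 1) n) || (l == stair (2 * n) n).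
Definition dec l := sorted gtn l && all (leq 1) l.

Lemma op1_eq m s c : s <= m.+1 -> op1 (rcons (stair m s ++ c) s) = stair m.+1 s ++ c.
Proof.
move=> hs; rewrite /op1 last_rcons size_rcons /= -cats1 take_size_cat //.
by rewrite take_size_cat ?size_stair // drop_size_cat ?size_stair // stair_succ.
Qed.

Lemma stair_pred m k : stair m.-1 k = map predn (stair m k).
Proof. rewrite /stair -map_comp; apply: eq_map => i /=; lia. Qed.

Lemma op2_eq m k t : sig (stair m k ++ t) = k ->
  op2 (stair m k ++ t) = rcons (stair m.-1 k ++ t) k.
Proof.
move=> hk; rewrite /op2 hk take_size_cat ?size_stair //.
by rewrite drop_size_cat ?size_stair // stair_pred.
Qed.

Lemma sig_stair0 m k : k <= m -> sig (stair m k.+1) = k.+1.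
Proof. by move=> h; rewrite -[stair _ _]cats0 sig_stair //; left. Qed.

Lemma last_stair m k : last 0 (stair m k.+1) = m - k.
Proof. by rewrite stair_rcons last_rcons. Qed.

Lemma pent_prop l : pent l -> l != [::] -> sig l = size l /\
   (last 0 l = size l \/ last 0 l = (size l).+1).
Proof.
rewrite /pent => + nl.
case hk: (size l) => [|k]; first by move/eqP: hk; rewrite size_eq0 (negbTE nl).
rewrite (negbTE nl) /= => /orP[/eqP e|/eqP e]; rewrite e sig_stair0 ?last_stair; try lia.
all: try (by split=> //; left; lia).
all: by split=> //; right; lia.
Qed.

Lemma path_mono a b c : path gtn a c -> a <= b -> path gtn b c.
Proof. case: c => //= z c /andP[h1 ->]; rewrite andbT; lia. Qed.

Lemma caseA m j c : j <= m -> dec (rcons (stair m j.+1 ++ c) j.+1) ->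
  let l := rcons (stair m j.+1 ++ c) j.+1 in let r := stair m.+1 j.+1 ++ c in
  [/\ op1 l = r, dec r, ~~ pent r, fr r = l &
      [/\ sumn r = sumn l, size l = (size r).+1 & head 0 r = (head 0 l).+1]].
Proof.
move=> hjm /andP[hs hpos] l r.
have hl : l = stair m j.+1 ++ rcons c j.+1 by rewrite /l rcons_cat.
move: hs; rewrite rcons_cat sorted_stair // rcons_path => /andP[hp hlast].
have hposc : all (leq 1) c.
  by move: hpos; rewrite rcons_cat all_cat all_rcons => /and3P[].
have hsr : sorted gtn r.
  rewrite /r sorted_stair; last lia.
  apply: (path_mono hp); lia.
have hdr : dec r by rewrite /dec hsr /r all_cat stair_pos ?hposc //; lia.
have hsig : sig r = j.+1.
  rewrite /r sig_stair; [done|lia|].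
  case: (c) hp => [|z c'] /=; [by left|move=> /andP[h _]; right; lia].
have hlastr : j.+1 < last 0 r.
  rewrite /r last_cat last_stair.
  move: hlast; case/lastP: (c) => [|c' z] /=; first lia.
  by rewrite !last_rcons.
have hnp : ~~ pent r.
  apply/negP => hpr.
  have rn : r != [::] by rewrite /r stairS.
  have [h1 h2] := pent_prop hpr rn.
  move: h1; rewrite hsig /r size_cat size_stair => hc.
  have c0 : c = [::] by apply/nilP; rewrite /nilp; lia.
  move: h2 hlast hlastr; rewrite /r c0 cats0 last_stair size_stair /=; lia.
split=> //.
- by rewrite /l op1_eq.
- rewrite /fr hsig.
  have -> : (last 0 r <= j.+1) = false by apply/negbTE; rewrite -ltnNge.
  by rewrite /r op2_eq -/r // hsig.
- split.
  + rewrite /r /l sumn_cat sumn_rcons sumn_cat stair_succ ?sumn_map_succ ?size_stair; lia.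
  + by rewrite /l /r size_rcons !size_cat !size_stair.
  + by rewrite /r /l !stairS /=.
Qed.

Lemma caseB m k d : k <= m -> dec (stair m k.+1 ++ d) ->
  sig (stair m k.+1 ++ d) = k.+1 -> k.+1 < last 0 (stair m k.+1 ++ d) ->
  ~~ pent (stair m k.+1 ++ d) -> (d = [::] \/ (head 0 d).+1 < m - k) ->
  let l := stair m k.+1 ++ d in let r := rcons (stair m.-1 k.+1 ++ d) k.+1 in
  [/\ op2 l = r, dec r, ~~ pent r, fr r = l &
      [/\ sumn r = sumn l, size r = (size l).+1 & head 0 l = (head 0 r).+1]].
Proof.
move=> hkm /andP[hs hpos] hsig hlast hnp hd l r.
move: hs; rewrite sorted_stair // => hp.
have hposd : all (leq 1) d by move: hpos; rewrite all_cat => /andP[].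
have hgap : d = [::] -> k.+3 <= m - k.
  move=> d0; move: hlast hnp; rewrite d0 cats0 last_stair => hlast hnp.
  have : m - k != k.+2.
    apply/negP => /eqP e; move: hnp; rewrite /pent size_stair.
    have -> : 2 * k.+1 = m by lia.
    by rewrite eqxx !orbT.
  lia.
have hm : k.+2 <= m.
  case: hd => [/hgap|]; first lia.
  case: (d) hposd => [|z d'] /=; first lia.
  move=> /andP[hz1 _] hz; lia.
have hm1 : m.-1.+1 = m by lia.
have hr : r = stair m.-1 k.+1 ++ rcons d k.+1 by rewrite /r rcons_cat.
have hlastd : k.+1 < last (m.-1 - k) d.
  have [d0|[d' [z dz]]] : d = [::] \/ exists d' z, d = rcons d' z.
    by case/lastP: (d) => [|d' z]; [left|right; exists d', z].
  - rewrite d0 /=. have := hgap d0. lia.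
  - by move: hlast; rewrite dz last_cat !last_rcons.
have hdr : dec r.
  apply/andP; split.
    rewrite hr sorted_stair; last lia.
    rewrite rcons_path; apply/andP; split; last exact: hlastd.
    case: (d) hd hp => [|z d'] //= [] // hz /andP[hz' ->]; rewrite andbT; lia.
  rewrite hr all_cat all_rcons stair_pos ?hposd //; lia.
have hnp' : ~~ pent r.
  apply/negP => hpr.
  have rn : r != [::] by rewrite /r; case: (stair _ _ ++ _).
  have [_ h2] := pent_prop hpr rn.
  move: h2; rewrite /r last_rcons size_rcons size_cat size_stair; lia.
split=> //.
- by rewrite /l op2_eq.
- rewrite /fr {1}/r last_rcons.
  have -> : (k.+1 <= sig r) = true by apply/idP; rewrite hr sig_ge //; lia.
  by rewrite /r op1_eq ?hm1 //; lia.
- split.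
  + rewrite /r /l sumn_rcons !sumn_cat -{2}hm1 stair_succ ?sumn_map_succ ?size_stair; lia.
  + by rewrite /l /r size_rcons !size_cat !size_stair.
  + by rewrite /r /l !stairS /= hm1.
Qed.

Lemma fr_props l : dec l -> ~~ pent l ->
  [/\ dec (fr l), ~~ pent (fr l), fr (fr l) = l, sumn (fr l) = sumn l &
      head 0 (fr l) + size (fr l) = head 0 l + size l /\
      odd (size (fr l)) = ~~ odd (size l)].
Proof.
case: l => [|x t] hd hnp; first by [].
have [k [d [hsig hl hkx hdd]]] := structure (proj1 (andP hd)).
case: (leqP (last 0 (x :: t)) (sig (x :: t))) => hcase.
- set s := last 0 (x :: t) in hcase.
  have hs1 : 1 <= s.
    move: hd => /andP[_ /allP]; apply; rewrite /s /=; exact: mem_last.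
  have hsz : size (x :: t) = k.+1 + size d by rewrite hl size_cat size_stair.
  have hsn : s < size (x :: t).
    rewrite ltnNge; apply/negP => hge.
    have d0 : d = [::] by apply/nilP; rewrite /nilp; lia.
    have hs : s = x - k by rewrite /s hl d0 cats0 last_stair.
    move: hnp; rewrite hl d0 cats0 /pent size_stair.
    have -> : 2 * k.+1 - 1 = x by lia.
    by rewrite eqxx orbT.
  have hj : s = s.-1.+1 by lia.
  set j := s.-1 in hj.
  have e : x :: t = stair x j.+1 ++ (stair (x - j.+1) (k.+1 - j.+1) ++ d).
    by rewrite hl catA -stair_cat subnKC //; lia.
  have : stair (x - j.+1) (k.+1 - j.+1) ++ d != [::].
    apply/eqP => h; move: hsz hsn; rewrite e h cats0 size_stair; lia.
  case/lastP: (stair _ _ ++ d) e => [//|c z] e _.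
  have ez : z = j.+1 by rewrite -hj /s e last_cat last_rcons.
  have hL : x :: t = rcons (stair x j.+1 ++ c) j.+1 by rewrite e -ez rcons_cat.
  have hjx : j <= x by lia.
  rewrite -/s hj hL in hcase.
  rewrite hL in hd *.
  have [e1 e2 e3 e4 [e5 e6 e7]] := caseA hjx hd.
  have hfr : fr (rcons (stair x j.+1 ++ c) j.+1) = stair x.+1 j.+1 ++ c.
    by rewrite /fr last_rcons hcase -e1.
  rewrite hfr e4 e5; split=> //; rewrite e6; split; [rewrite e7; lia|].
  by rewrite /= negbK.
- rewrite hl in hd hnp hcase hsig *.
  rewrite hsig in hcase.
  have [e1 e2 e3 e4 [e5 e6 e7]] := caseB hkx hd hsig hcase hnp hdd.
  have hfr : fr (stair x k.+1 ++ d) = rcons (stair x.-1 k.+1 ++ d) k.+1.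
    by rewrite /fr hsig leqNgt hcase /= e1.
  rewrite hfr e4 e5; split=> //; rewrite e6; split; [rewrite e7; lia|].
  by [].
Qed.

Section Sets.
Variable N : nat.
Implicit Types (A : {set 'I_N.+1}) (l : seq nat).

Definition ls A : seq nat := rev (sort leq [seq val i | i <- enum A]).
Definition st l : {set 'I_N.+1} := [set i | val i \in l].

Lemma ls_sorted A : sorted gtn (ls A).
Proof.
rewrite /ls rev_sorted.
have -> : sorted (fun z => gtn^~ z) (sort leq [seq val i | i <- enum A]) =
          sorted ltn (sort leq [seq val i | i <- enum A]) by [].
rewrite ltn_sorted_uniq_leq sort_uniq (map_inj_uniq val_inj) enum_uniq /=.
exact: (sort_sorted leq_total).
Qed.

Lemma mem_ls A (i : 'I_N.+1) : (val i \in ls A) = (i \in A).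
Proof. by rewrite /ls mem_rev mem_sort (mem_map val_inj) mem_enum. Qed.

Lemma ls_bound A x : x \in ls A -> x < N.+1.
Proof. by rewrite /ls mem_rev mem_sort => /mapP[i _ ->]; apply: ltn_ord. Qed.

Lemma st_ls A : st (ls A) = A.
Proof. by apply/setP => i; rewrite inE mem_ls. Qed.

Lemma ls_st l : sorted gtn l -> all (fun x => x < N.+1) l -> ls (st l) = l.
Proof.
move=> hs hb; apply: (irr_sorted_eq (leT := gtn)) => //.
- by move=> a b c /= h1 h2; apply: ltn_trans h2 h1.
- by move=> a /=; rewrite ltnn.
- exact: ls_sorted.
move=> x; apply/idP/idP.
  move=> hx; have hxN := ls_bound hx.
  by move: hx; rewrite -[x]/(val (Ordinal hxN)) mem_ls inE.
move=> hx; have hxN : x < N.+1 by move/allP: hb; apply.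
by rewrite -[x]/(val (Ordinal hxN)) mem_ls inE.
Qed.

Lemma perm_ls A : perm_eq (ls A) [seq val i | i <- enum A].
Proof. by rewrite /ls perm_rev perm_sort perm_refl. Qed.

Lemma sum_ls A : (\sum_(i in A) (i : nat))%N = sumn (ls A).
Proof. by rewrite sumnE (perm_big _ (perm_ls A)) big_map big_enum. Qed.

Lemma card_ls A : #|A| = size (ls A).
Proof. by rewrite /ls size_rev size_sort size_map cardE. Qed.

Lemma max_sorted l : sorted gtn l -> (\max_(x <- l) x)%N = head 0 l.
Proof.
elim: l => [|x t IH] /= h; first by rewrite big_nil.
rewrite big_cons IH ?(path_sorted h) //; apply/maxn_idPl.
by case: t h {IH} => //= y t /andP[h _]; apply: ltnW.
Qed.

Lemma max_ls A : (\max_(i in A) (i : nat))%N = head 0 (ls A).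
Proof.
by rewrite -max_sorted ?ls_sorted // (perm_big _ (perm_ls A)) big_map big_enum.
Qed.

Lemma all_pos l : all (leq 1) l = (0 \notin l).
Proof. by elim: l => //= x l ->; rewrite inE; case: x. Qed.

Lemma dpart_ls A : is_dpart A = dec (ls A) && (sumn (ls A) == N).
Proof.
rewrite /is_dpart /dec ls_sorted all_pos -sum_ls.
by rewrite -[0]/(val (@ord0 N)) mem_ls.
Qed.

Lemma elem_le_sumn l x : x \in l -> x <= sumn l.
Proof. elim: l => //= y l IH; rewrite inE => /orP[/eqP ->|/IH]; lia. Qed.

Lemma size_le_sumn l : all (leq 1) l -> size l <= sumn l.
Proof. elim: l => //= y l IH /andP[h1 /IH]; lia. Qed.

Definition F A := if is_dpart A && ~~ pent (ls A) then st (fr (ls A)) else A.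

Lemma F_props A : is_dpart A -> ~~ pent (ls A) ->
  [/\ ls (F A) = fr (ls A), is_dpart (F A), ~~ pent (ls (F A)) & F (F A) = A].
Proof.
move=> hd hnp; have := hd; rewrite dpart_ls => /andP[hdec /eqP hsum].
have [r1 r2 r3 r4 [r5 r6]] := fr_props hdec hnp.
have hls : ls (F A) = fr (ls A).
  rewrite /F hd hnp /= ls_st //; first by case/andP: r1.
  apply/allP => x hx; have := elem_le_sumn hx; rewrite r4 hsum; lia.
have hd' : is_dpart (F A) by rewrite dpart_ls hls r1 r4 hsum eqxx.
split=> //; first by rewrite hls.
by rewrite {1}/F hd' hls r2 /= r3 st_ls.
Qed.

End Sets.
Import GRing.Theory Num.Theory.
Local Open Scope ring_scope.

Lemma invol_sum (T : finType) (P : pred T) (f : T -> T) (w : T -> int) :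
  (forall x, f (f x) = x) -> (forall x, P x -> P (f x)) ->
  (forall x, P x -> w (f x) = - w x) -> \sum_(x | P x) w x = 0.
Proof.
move=> ff Pf wf.
have finj : injective f by apply: (can_inj ff).
set S := \sum_(x | P x) w x.
have : S = - S.
  rewrite {1}/S (reindex_inj finj) /=.
  rewrite (eq_bigl P); last first.
    move=> x; apply/idP/idP; last exact: Pf.
    by move/Pf; rewrite ff.
  by rewrite /S -sumrN; apply: eq_bigr => x /wf.
lia.
Qed.

Definition g (l : seq nat) (r : nat) : int :=
  (-1) ^+ r * ((3 * r - 1)%:Z * (l == stair (2 * r - 1) r)%:Z
             + (3 * r)%:Z * (l == stair (2 * r) r)%:Z).

Lemma dec_stair m k : (k <= m)%N -> dec (stair m k).
Proof.
case: k => [|k] h; first by [].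
by rewrite /dec -[stair _ _]cats0 sorted_stair ?cats0 ?stair_pos //; lia.
Qed.

Section Main.
Variable N : nat.

Lemma count_ls S : dec S -> pent S ->
  \sum_(A : {set 'I_N.+1} | is_dpart A && pent (ls A)) ((ls A == S) : nat)%:Z
  = ((sumn S == N) : nat)%:Z.
Proof.
move=> hdec hp; case hS: (sumn S == N).
  have hb : all (fun x => x < N.+1)%N S.
    apply/allP => x /elem_le_sumn; move/eqP: hS; lia.
  have hls : ls (st N S) = S by rewrite ls_st //; case/andP: hdec.
  rewrite (bigD1 (st N S)) /=; last by rewrite dpart_ls hls hdec hS hp.
  rewrite hls eqxx big1 ?addr0 // => A /andP[_ hne].
  case: eqP => // e; move: hne; by rewrite -e st_ls eqxx.
rewrite big1 // => A /andP[hA _]; case: eqP => // e.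
by move: hA; rewrite dpart_ls e hS andbF.
Qed.


Lemma wt_pent (A : {set 'I_N.+1}) : is_dpart A -> pent (ls A) ->
  (-1) ^+ npart A * (mpart A + npart A)%:Z = \sum_(1 <= r < N.+2) g (ls A) r.
Proof.
move=> hd hp; rewrite /npart /mpart card_ls max_ls.
move: hd; rewrite dpart_ls => /andP[hdec /eqP hsum].
move: hp hdec hsum; set l := ls A => hp hdec hsum.
have [l0|ln0] := eqVneq l [::].
  rewrite l0 /= expr0 mul1r; symmetry; rewrite big_nat big1 // => r /andP[hr _].
  rewrite /g; case: r hr => [//|r'] _; rewrite !stairS /=.
  by rewrite -[Posz 0]/(0%R : int) !mulr0 ?addr0 ?mulr0.
have [n' hn'] : exists n', size l = n'.+1 by case: (l) ln0 => // x t _; exists (size t).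
have hnN : (n'.+1 <= N)%N by rewrite -hn' -hsum; apply: size_le_sumn; case/andP: hdec.
rewrite hn' (bigD1_seq n'.+1); [|by rewrite mem_index_iota; lia|exact: iota_uniq].
rewrite big1_seq ?addr0; last first.
  move=> r /andP[hrn _]; rewrite /g.
  have ne : forall m, (l == stair m r) = false.
    move=> m; apply/negbTE; apply/eqP => /(congr1 size); rewrite size_stair hn' => e.
    by move: hrn; rewrite -e eqxx.
  by rewrite !ne /= -[Posz 0]/(0%R : int) !mulr0 ?addr0 ?mulr0.
move: hp; rewrite /pent hn' (negbTE ln0) /= => /orP[/eqP e|/eqP e].
- rewrite /g e eqxx.
  have -> : (stair (2 * n'.+1 - 1) n'.+1 == stair (2 * n'.+1) n'.+1) = false.
    apply/negbTE; apply/eqP; rewrite !stairS => /(congr1 (head 0)) /=; lia.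
  rewrite stairS /= -[Posz 0]/(0%R : int) -[Posz 1]/(1%R : int) mulr1 mulr0 !addr0; congr (_ * Posz _); lia.
- rewrite /g e eqxx.
  have -> : (stair (2 * n'.+1) n'.+1 == stair (2 * n'.+1 - 1) n'.+1) = false.
    apply/negbTE; apply/eqP; rewrite !stairS => /(congr1 (head 0)) /=; lia.
  rewrite stairS /= -[Posz 0]/(0%R : int) -[Posz 1]/(1%R : int) mulr1 mulr0 add0r addr0; congr (_ * Posz _); lia.
Qed.

Lemma wt_F (A : {set 'I_N.+1}) : is_dpart A -> ~~ pent (ls A) ->
  (-1) ^+ npart (F A) * (mpart (F A) + npart (F A))%:Z =
  - ((-1) ^+ npart A * (mpart A + npart A)%:Z).
Proof.
move=> hd hnp; have [r1 _ _ _] := F_props hd hnp.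
move: (hd); rewrite dpart_ls => /andP[hdec _].
have [_ _ _ _ [e1 e2]] := fr_props hdec hnp.
rewrite /npart /mpart !card_ls !max_ls r1 e1 -signr_odd e2 signrN signr_odd.
by rewrite mulNr.
Qed.

Lemma sumn_s1 r : (1 <= r)%N -> sumn (stair (2 * r - 1) r) = ((r * (3 * r - 1)) %/ 2)%N.
Proof.
move=> hr; have := @sumn_stair2 (2 * r - 1) r ltac:(lia).
have -> : (2 * (2 * r - 1) + 1 - r = 3 * r - 1)%N by lia.
by move=> h; rewrite -h mulKn.
Qed.

Lemma sumn_s2 r : sumn (stair (2 * r) r) = ((r * (3 * r + 1)) %/ 2)%N.
Proof.
have := @sumn_stair2 (2 * r) r ltac:(lia).
have -> : (2 * (2 * r) + 1 - r = 3 * r + 1)%N by lia.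
by move=> h; rewrite -h mulKn.
Qed.

End Main.

Theorem mainTheorem2 : lhs_series = rhs_series.
Proof.
apply: functional_extensionality => N.
rewrite /lhs_series /rhs_series (bigID (fun A => pent (ls A))) /=.
rewrite [X in _ + X](@invol_sum _ _ (F (N:=N))) ?addr0; first last.
- by move=> A /andP[hd hnp]; apply: wt_F.
- by move=> A /andP[hd hnp]; case: (F_props hd hnp) => _ -> ->.
- move=> A; case h: (is_dpart A && ~~ pent (ls A)).
    by case/andP: h => hd hnp; case: (F_props hd hnp).
  have FA : F A = A by rewrite /F h.
  by rewrite FA FA.
rewrite (eq_bigr (fun A => \sum_(1 <= r < N.+2) g (ls A) r)); last first.
  by move=> A /andP[hd hp]; apply: wt_pent.
rewrite exchange_big /=; apply: eq_big_nat => r /andP[hr _].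
rewrite /g -big_distrr /= big_split /= -!big_distrr /=.
rewrite !count_ls ?dec_stair //; try lia.
- by rewrite sumn_s1 // sumn_s2.
- by rewrite /pent size_stair eqxx !orbT.
- by rewrite /pent size_stair eqxx !orbT.
Qed.
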